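(* Let $X(t)$, $t\in T$, be a separable centered Gaussian random function with $\rho(s,t)=(\mathbb{E}(X(t)-X(s))^2)^{1/2}$, $(T,\rho)$ relatively compact, and covering numbers $N(\varepsilon)$; let $\Psi$ be a function with $N(u)\le\Psi(u)$ for all $u>0$. Let $r\in(0,1)$, $\varepsilon>0$, $n\ge1$, and let $(\varepsilon_k)_{0\le k\le n}$ be a decreasing positive sequence with $\varepsilon_n=\varepsilon$ and $$\Psi(\varepsilon_k)\le r\,\Psi(\varepsilon_{k+1}),\qquad 1\le k\le n-1.$$ Set $b_k=r^{n-k}\varepsilon$ for $0\le k<n$. Then $$\prod_{k=0}^{n-1}\mathbb{P}(\varepsilon_k|\xi|\le b_k)^{N(\varepsilon_{k+1})}\ge\exp\big\{-C_4(r)\Psi(\varepsilon)-(1-r)^{-1}G\big\},$$ where $\xi$ is standard normal, $C_4(r)$ depends only on $r$, and $G=\sum_{\ell=1}^n(\log\varepsilon_{\ell-1}-\log\varepsilon_\ell)\Psi(\varepsilon_\ell)$.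
   Context: $N(\varepsilon)$ is the minimal number of points $t_1,\dots,t_n\in T$ such that every $t\in T$ has $\rho(t,t_i)\le\varepsilon$ for some $i$. *)

(* Defs.v *)
From HB Require Import structures.
From mathcomp Require Import all_boot all_order all_algebra.
From mathcomp Require Import all_classical all_reals all_analysis.
Set Implicit Arguments. Unset Strict Implicit. Unset Printing Implicit Defensive.
Import Order.TTheory GRing.Theory Num.Theory.
Import numFieldNormedType.Exports.
Local Open Scope classical_set_scope.
Local Open Scope ring_scope.

Section Defs.
Context {R : realType}.

Definition covers {T : Type} (rho : T -> T -> R) (eps : R) (n : nat) : Prop :=
  exists f : 'I_n -> T, forall t : T, exists i : 'I_n, rho t (f i) <= eps.

(* Covering number N(eps): minimal number of points of an eps-net
   (0 by convention if no finite eps-net exists; never used in that case). *)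
Definition covnum {T : Type} (rho : T -> T -> R) (eps : R) : nat :=
  match pselect (exists n, `[< covers rho eps n >]) with
  | left h => ex_minn h
  | right _ => 0%N
  end.

(* (T, rho) relatively compact = totally bounded: finite eps-nets for all eps > 0 *)
Definition totally_bounded {T : Type} (rho : T -> T -> R) : Prop :=
  forall eps : R, 0 < eps -> exists n, covers rho eps n.

Context {d : measure_display} {Omega : measurableType d} (P : probability Omega R).

Definition gdist {T : Type} (X : T -> Omega -> R) (s t : T) : R :=
  Num.sqrt (fine ('E_P[fun w => ((X t w - X s w) ^+ 2)%R])%E).

(* centered Gaussian random function: every finite linear combination
   sum_i c_i X(t_i) is a centered normal variable (possibly degenerate, i.e.
   a.s. equal to 0). *)
Definition centered_gaussian {T : Type} (X : T -> Omega -> R) : Prop :=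
  (forall t, measurable_fun setT (X t)) /\
  forall s : seq (T * R),
    let Y := fun w => \sum_(p <- s) p.2 * X p.1 w in
    (P (Y @^-1` [set 0]) = 1%E) \/
    exists sigma : R, 0 < sigma /\
      forall A : set R, measurable A -> P (Y @^-1` A) = normal_prob 0 sigma A.

(* separability (in Doob's sense, w.r.t. rho): there is a countable set S and a
   P-null set N such that outside N every value X t w is a limit of values
   X (u n) w along a sequence u of points of S converging to t. *)
Definition separable_rf {T : Type} (X : T -> Omega -> R) : Prop :=
  exists S : set T, countable S /\
  exists N : set Omega, P.-negligible N /\
    forall w, ~ N w -> forall t : T, exists u : nat -> T,
      (forall k, S (u k)) /\
      (gdist X (u k) t @[k --> \oo] --> 0) /\
      (X (u k) w @[k --> \oo] --> X t w).

End Defs.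

(* Main.v *)
Require Import Defs.
From HB Require Import structures.
From mathcomp Require Import all_boot all_order all_algebra.
From mathcomp Require Import all_classical all_reals all_analysis.
From mathcomp Require Import lra zify ring measurable_realfun.
Import Order.TTheory GRing.Theory Num.Theory.
Import numFieldNormedType.Exports.
Local Open Scope classical_set_scope.
Local Open Scope ring_scope.

Lemma prob_lb (R : realType) (a : R) (ha0 : 0 < a) (ha1 : a <= 1) :
  (((a *+ 2) * (normal_peak (1:R) * expR (-1)))%:E <= normal_prob 0%R 1%R `[(- a)%R, a]%classic)%E.
Proof.
set c := normal_peak (1:R) * expR (-1).
have mI : measurable (`[-a, a]%classic : set R) by [].
have -> : ((a *+ 2) * c)%:E = (\int[lebesgue_measure]_(x in `[(- a)%R, a]%classic) (cst c%:E) x)%E.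
  rewrite integral_cst //.
  have := lebesgue_measure_itv (R:=R) `[(- a)%R, a].
  rewrite /= ifT; last by rewrite lte_fin; lra.
  move=> ->; rewrite -EFinD -EFinM mulrC; congr (_ * _)%:E; lra.
rewrite /normal_prob; apply: ge0_le_integral => //.
- by move=> x _; rewrite lee_fin /c mulr_ge0 ?normal_peak_ge0 ?expR_ge0.
- apply/measurable_EFinP; exact: measurable_funS (measurable_normal_pdf 0 1).
- move=> x /=; rewrite in_itv /= => /andP[h1 h2].
  rewrite lee_fin normal_pdfE ?oner_neq0 // /c ler_wpM2l ?normal_peak_ge0 //.
  rewrite /normal_fun ler_expR subr0 expr1n.
  have : x ^+ 2 <= 1 by nra.
  move=> hx; rewrite -mulNr ler_pdivlMr; last by lra.
  lra.
Qed.


Lemma sumA_closed (R : realType) (r A B : R) (n : nat) : r != 1 ->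
  \sum_(k < n) r ^+ (n - k.+1) * (A + (n - k)%:R * B) =
  A * (1 - r ^+ n) / (1 - r) + B * ((1 - r ^+ n) / (1 - r) ^+ 2 - n%:R * r ^+ n / (1 - r)).
Proof.
move=> r1; have r1' : 1 - r != 0 by rewrite subr_eq0 eq_sym.
elim: n => [|n IH]; first by rewrite big_ord0 expr0; field.
rewrite big_ord_recl /= subn1 subn0.
under eq_bigr => i _ do rewrite /bump /= add1n subSS.
rewrite IH succnK -natr1 (exprS r n).
field; exact: r1'.
Qed.

Lemma sumA_le (R : realType) (r A B : R) (n : nat) : 0 < r -> r < 1 -> 0 <= A -> 0 <= B ->
  \sum_(k < n) r ^+ (n - k.+1) * (A + (n - k)%:R * B) <= A / (1 - r) + B / (1 - r) ^+ 2.
Proof.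
move=> r0 r1 A0 B0; rewrite sumA_closed; last by rewrite lt_eqF.
have rn0 : 0 <= r ^+ n by rewrite exprn_ge0 // ltW.
have rn1 : r ^+ n <= 1 by rewrite exprn_ile1 // ltW.
have q0 : 0 < 1 - r by lra.
have n0 : 0 <= n%:R * r ^+ n / (1 - r) :> R by rewrite divr_ge0 ?mulr_ge0 // ltW.
apply: lerD.
  rewrite -mulrA ler_wpM2l //.
  have : (1 - r ^+ n) / (1 - r) <= 1 / (1 - r).
    rewrite ler_pM2r ?invr_gt0 //; lra.
  by rewrite mul1r.
rewrite ler_wpM2l //.
have : (1 - r ^+ n) / (1 - r) ^+ 2 <= 1 / (1 - r) ^+ 2.
  rewrite ler_pM2r ?invr_gt0 ?exprn_gt0 //; lra.
rewrite mul1r; lra.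
Qed.


Lemma geom_le (R : realType) (r : R) (n : nat) : 0 < r -> r < 1 ->
  \sum_(k < n) r ^+ (n - k.+1) <= (1 - r)^-1.
Proof.
move=> r0 r1; have := @sumA_le R r 1 0 n r0 r1 ler01 (lexx 0).
by under eq_bigr => i _ do rewrite mulr0 addr0 mulr1; rewrite mul0r addr0 div1r.
Qed.

Lemma sumB (R : realType) (r : R) (u N Q : nat -> R) (n : nat) : 0 < r -> r < 1 ->
  (forall l, (1 <= l <= n)%N -> u l <= u l.-1) ->
  (forall j, (1 <= j <= n)%N -> 0 <= N j) ->
  (forall j l, (1 <= j)%N -> (j <= l)%N -> (l <= n)%N -> N j <= r ^+ (l - j) * Q l) ->
  \sum_(k < n) N k.+1 * (u k - u n) <= (1 - r)^-1 * \sum_(1 <= l < n.+1) (u l.-1 - u l) * Q l.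
Proof.
move=> r0 r1; elim: n => [|n IH] hu hN hNQ.
  by rewrite big_ord0 big_geq // mulr0.
have IH' := IH (fun l hl => hu l ltac:(lia)) (fun j hj => hN j ltac:(lia))
  (fun j l h1 h2 h3 => hNQ j l h1 h2 ltac:(lia)).
have -> : \sum_(k < n.+1) N k.+1 * (u k - u n.+1) =
   \sum_(k < n.+1) N k.+1 * (u k - u n) + (u n - u n.+1) * \sum_(k < n.+1) N k.+1.
  rewrite mulr_sumr -big_split /=; apply: eq_bigr => i _; ring.
rewrite big_ord_recr /= subrr mulr0 addr0.
rewrite big_nat_recr //= mulrDr; apply: lerD => //.
have Q0 : 0 <= Q n.+1.
  have := hNQ n.+1 n.+1 isT (leqnn _) (leqnn _); rewrite subnn expr0 mul1r.
  by apply: le_trans; apply: hN; lia.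
have du : 0 <= u n - u n.+1 by have := hu n.+1 ltac:(lia); simpl; lra.
rewrite mulrCA ler_wpM2l //.
apply: (@le_trans _ _ (\sum_(k < n.+1) r ^+ (n.+1 - k.+1) * Q n.+1)).
  apply: ler_sum => i _; have := hNQ i.+1 n.+1 isT (ltn_ord i) (leqnn _).
  by rewrite subSS.
by rewrite -mulr_suml mulrC [X in _ <= X]mulrC ler_wpM2l // geom_le.
Qed.

Theorem lemma4 (R : realType) (r : R) (hr0 : 0 < r) (hr1 : r < 1) :
  exists C4 : R,
  forall (d : measure_display) (Omega : measurableType d)
    (P : probability Omega R) (T : Type) (X : T -> Omega -> R),
  centered_gaussian P X ->
  separable_rf P X ->
  totally_bounded (gdist P X) ->
  forall (Psi : R -> R),
  (forall u : R, 0 < u -> ((covnum (gdist P X) u)%:R <= Psi u)) ->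
  forall (eps : R) (n : nat) (e : nat -> R),
  0 < eps -> (1 <= n)%N ->
  (forall k : nat, (k <= n)%N -> 0 < e k) ->
  (forall k : nat, (k < n)%N -> e k.+1 < e k) ->
  e n = eps ->
  (forall k : nat, (1 <= k)%N -> (k <= n.-1)%N -> Psi (e k) <= r * Psi (e k.+1)) ->
  let b := fun k : nat => r ^+ (n - k) * eps in
  let G := \sum_(1 <= l < n.+1) (ln (e l.-1) - ln (e l)) * Psi (e l) in
  \prod_(k < n)
     (fine (normal_prob 0 1 [set x : R | e k * `|x| <= b k])) ^+ (covnum (gdist P X) (e k.+1))
  >= expR (- C4 * Psi eps - (1 - r)^-1 * G).
Proof.
set c : R := (normal_peak (1:R) * expR (-1)) *+ 2.
have c0 : 0 < c by rewrite pmulrn_lgt0 // mulr_gt0 ?expR_gt0 // normal_peak_gt0 // oner_neq0.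
exists (`|ln c| / (1 - r) + `|ln r| / (1 - r) ^+ 2).
move=> d Omega P T X _ _ _ Psi hPsi eps n e eps0 n1 e0 edec en hrat.
pose b := fun k : nat => r ^+ (n - k) * eps.
pose G := \sum_(1 <= l < n.+1) (ln (e l.-1) - ln (e l)) * Psi (e l).
change (expR (- (`|ln c| / (1 - r) + `|ln r| / (1 - r) ^+ 2) * Psi eps - (1 - r)^-1 * G) <=
  \prod_(k < n) (fine (normal_prob 0 1 [set x : R | e k * `|x| <= b k])) ^+ (covnum (gdist P X) (e k.+1))).
set NN := fun j => (covnum (gdist P X) (e j))%:R : R.
have hNPsi : forall j, (j <= n)%N -> NN j <= Psi (e j) := fun j hj => hPsi _ (e0 j hj).
have emono : forall k l, (k <= l)%N -> (l <= n)%N -> e l <= e k.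
  move=> k l kl hln; rewrite -(subnKC kl).
  have : (k + (l - k) <= n)%N by lia.
  elim: (l - k)%N => [|m IH] hm; first by rewrite addn0.
  rewrite addnS; apply: le_trans (IH ltac:(lia)); apply/ltW/edec; lia.
have chain : forall m j, (1 <= j)%N -> (j + m <= n)%N -> Psi (e j) <= r ^+ m * Psi (e (j + m)%N).
  elim=> [|m IH] j j1 jm; first by rewrite addn0 expr0 mul1r.
  apply: le_trans (hrat j j1 ltac:(lia)) _.
  rewrite exprS -mulrA; apply: ler_wpM2l; first exact: ltW.
  by have := IH j.+1 isT ltac:(lia); rewrite addSnnS.
have hNQ : forall j l, (1 <= j)%N -> (j <= l)%N -> (l <= n)%N -> NN j <= r ^+ (l - j) * Psi (e l).
  move=> j l h1 h2 h3; apply: le_trans (hNPsi j ltac:(lia)) _.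
  by have := chain (l - j)%N j h1 ltac:(lia); rewrite subnKC.
have hN0 : forall j, 0 <= NN j by move=> j; exact: ler0n.
have Psi0 : 0 <= Psi eps by apply: le_trans (hN0 n) _; rewrite -en; exact: hNPsi.
have hp : forall k : 'I_n, b k / e k * c <= fine (normal_prob 0 1 [set x : R | e k * `|x| <= b k]).
  move=> k; have ek0 := e0 k (ltnW (ltn_ord k)).
  have b0 : 0 < b k by rewrite /b mulr_gt0 // exprn_gt0.
  have a0 : 0 < b k / e k by rewrite divr_gt0.
  have a1 : b k / e k <= 1.
    rewrite ler_pdivrMr // mul1r /b.
    have : eps <= e k by rewrite -en; apply: emono => //; exact: ltnW.
    have : r ^+ (n - k) <= 1 by rewrite exprn_ile1 // ltW.
    nra.
  have -> : [set x : R | e k * `|x| <= b k] = `[(- (b k / e k))%R, b k / e k]%classic.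
    apply/seteqP; split => x /=; rewrite in_itv /= -ler_norml ler_pdivlMr // mulrC //.
  have := @prob_lb R _ a0 a1.
  have h1 : (normal_prob (0:R) 1 `[(- (b k / e k))%R, (b k / e k)%R]%classic <= 1)%E :=
    probability_le1 (normal_prob (0:R) 1) (measurable_itv `[(- (b k / e k))%R, b k / e k]).
  move: h1.
  case: (normal_prob 0 1 _) => [x| |] /=.
  - by move=> _; rewrite lee_fin /c mulrnAl -mulrnAr.
  - by rewrite leye_eq.
  - by move=> _; rewrite leeNy_eq.
have Hprod : \prod_(k < n) (b k / e k * c) ^+ (covnum (gdist P X) (e k.+1)) <=
  \prod_(k < n) (fine (normal_prob 0 1 [set x : R | e k * `|x| <= b k])) ^+ (covnum (gdist P X) (e k.+1)).
  apply: ler_prod => i _.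
  have ei0 := e0 i (ltnW (ltn_ord i)).
  have bi0 : 0 < b i by rewrite /b mulr_gt0 // exprn_gt0.
  have ai0 : 0 <= b i / e i * c by rewrite ltW // mulr_gt0 // divr_gt0.
  apply/andP; split; first by rewrite exprn_ge0.
  apply: lerXn2r; last exact: hp.
    by rewrite nnegrE.
  by rewrite nnegrE; apply: le_trans (hp i).
apply: le_trans Hprod.
have lnE : forall k : 'I_n, ln (b k / e k * c) =
    (ln c + (n - k)%:R * ln r) - (ln (e k) - ln (e n)).
  move=> k; have ek0 := e0 k (ltnW (ltn_ord k)).
  have eki : 0 < (e k)^-1 by rewrite invr_gt0.
  rewrite /b en lnM ?posrE ?mulr_gt0 ?divr_gt0 ?exprn_gt0 //.
  rewrite lnM ?posrE ?mulr_gt0 ?invr_gt0 ?exprn_gt0 //.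
  rewrite lnM ?posrE ?exprn_gt0 // lnV ?posrE // lnXn // mulr_natl.
  ring.
have -> : \prod_(k < n) (b k / e k * c) ^+ (covnum (gdist P X) (e k.+1)) =
    expR (\sum_(k < n) NN k.+1 * ((ln c + (n - k)%:R * ln r) - (ln (e k) - ln (e n)))).
  rewrite expR_sum; apply: eq_bigr => k _.
  rewrite -lnE expRM_natl lnK // posrE mulr_gt0 // divr_gt0 //.
    by rewrite /b mulr_gt0 // exprn_gt0.
  exact: e0 (ltnW (ltn_ord k)).
rewrite ler_expR.
under eq_bigr => k _ do rewrite mulrBr.
rewrite sumrB.
have HB : \sum_(k < n) NN k.+1 * (ln (e k) - ln (e n)) <= (1 - r)^-1 * G.
  apply: (@sumB R r (fun k => ln (e k)) NN (fun l => Psi (e l)) n hr0 hr1) => //.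
  move=> l hl; rewrite ler_ln ?posrE ?e0 //; last lia.
    by apply: emono; lia.
  lia.
have HA : - (`|ln c| / (1 - r) + `|ln r| / (1 - r) ^+ 2) * Psi eps <=
    \sum_(k < n) NN k.+1 * (ln c + (n - k)%:R * ln r).
  apply: (@le_trans _ _ (\sum_(k < n) - (r ^+ (n - k.+1) * (`|ln c| + (n - k)%:R * `|ln r|)) * Psi eps)).
    rewrite -mulr_suml sumrN mulNr mulNr lerN2 ler_wpM2r //.
    by apply: sumA_le => //.
  apply: ler_sum => k _.
  have hv : - (`|ln c| + (n - k)%:R * `|ln r|) <= ln c + (n - k)%:R * ln r.
    have h1 := ler_normD (ln c) ((n - k)%:R * ln r).
    rewrite normrM normr_nat in h1.
    have h2 := ler_normr (ln c + (n - k)%:R * ln r).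
    have h3 : - `|ln c + (n - k)%:R * ln r| <= ln c + (n - k)%:R * ln r.
      by rewrite lerNl -normrN; exact: ler_norm.
    lra.
  have hW : 0 <= `|ln c| + (n - k)%:R * `|ln r| by rewrite addr_ge0 // mulr_ge0.
  have hY := hNQ k.+1 n isT (ltn_ord k) (leqnn n).
  rewrite en in hY.
  have := hN0 k.+1.
  nra.
lra.
Qed.
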